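(* Let $P$ be a disjunctive finitely recursive program and $P_1,P_2,\dots$ a module sequence for $P$. A ground formula $F$ in the language of $P$ is a skeptical consequence of $P$ if and only if there exists a finite $k\ge1$ such that $F$ is a skeptical consequence of $P_k$ and $\mathit{atom}(F)\subseteq\mathit{atom}(P_k)$.
   Context: A disjunctive program is a set of rules $A_1\vee\dots\vee A_m\leftarrow L_1,\dots,L_n$ ($m>0$, $n\ge0$), $A_j$ atoms, $L_i$ atoms or negated atoms $\mathtt{not}\,A$, possibly with function symbols; $head(r)=\{A_1,\dots,A_m\}$. $\mathsf{Ground}(P)$ is its ground instantiation; for a set $X$ of ground rules, $\mathit{atom}(X)$ is the set of ground atoms occurring in $X$. For a set $Q$ of ground rules and a set $M$ of ground atoms, $Q^M$ is obtained by deleting rules of $Q$ having some $\mathtt{not}\,B$ in the body with $B\in M$ and deleting negative literals from the remaining rules; $M$ is a stable model of $Q$ iff it is a minimal Herbrand model of $Q^M$ (stable models of $P$ are those of $\mathsf{Ground}(P)$). A ground formula is a closed propositional combination of ground atoms; $\mathit{atom}(F)$ is the set of ground atoms occurring in $F$. $F$ is a skeptical consequence of a program iff $F$ is (classically) true in every stable model of it (vacuously if there is none). The dependency graph has ground atoms as vertices and an edge $A\to B$ whenever some $r\in\mathsf{Ground}(P)$ has $A\in head(r)$ and $B$ occurring in $r$ (body or head); $A$ depends on $B$ if there is a directed path from $A$ to $B$ (every atom depends on itself). $P$ is finitely recursive iff each ground atom depends on finitely many ground atoms. With $GH$ the set of ground head atoms of $\mathsf{Ground}(P)$ and an enumeration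 $p_1,p_2,\dots$ of $GH$, the induced module sequence is $P_1=\{r\in\mathsf{Ground}(P)\mid p_1$ depends on some atom of $head(r)\}$, $P_{i+1}=P_i\cup\{r\in\mathsf{Ground}(P)\mid p_{i+1}$ depends on some atom of $head(r)\}$. *)

(* Defs.v *)
From Stdlib Require Import List Relations Arith.
Import ListNotations.

(* First-order terms: variables and function symbols (a constant is a
   function symbol applied to the empty list).  A symbol is identified by
   its name together with its arity (= number of arguments). *)
Inductive term : Type :=
| Var : nat -> term
| Fn  : nat -> list term -> term.

Record atom : Type := mkAtom { pred : nat ; args : list term }.

Inductive lit : Type :=
| Pos : atom -> lit
| Neg : atom -> lit.

Definition lit_atom (l : lit) : atom :=
  match l with Pos a => a | Neg a => a end.

(* A1 v ... v Am <- L1, ..., Ln *)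
Record rule : Type := mkRule { head : list atom ; body : list lit }.

Definition program := list rule.

Definition disjunctive_program (P : program) : Prop :=
  forall r, In r P -> head r <> [].

Definition rset := rule -> Prop.
Definition aset := atom -> Prop.

Definition atom_in_rule (A : atom) (r : rule) : Prop :=
  In A (head r) \/ exists l, In l (body r) /\ lit_atom l = A.

Definition atoms_of (X : rset) : aset :=
  fun A => exists r, X r /\ atom_in_rule A r.

Inductive subterm : term -> term -> Prop :=
| st_refl : forall t, subterm t t
| st_arg  : forall t u f ts, In u ts -> subterm t u -> subterm t (Fn f ts).

Definition fsym_occurs (P : program) (f n : nat) : Prop :=
  exists r A u ts, In r P /\ atom_in_rule A r /\ In u (args A) /\
    subterm (Fn f ts) u /\ length ts = n.

(* The signature used to build the Herbrand universe of P: the function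
   symbols of P, plus one constant (symbol 0 of arity 0) if P has none. *)
Definition herbrand_sig (P : program) (f n : nat) : Prop :=
  fsym_occurs P f n \/ (f = 0 /\ n = 0 /\ ~ exists c, fsym_occurs P c 0).

Inductive ground_over (S : nat -> nat -> Prop) : term -> Prop :=
| go_fn : forall f ts, S f (length ts) ->
    (forall t, In t ts -> ground_over S t) -> ground_over S (Fn f ts).

Definition herbrand_universe (P : program) : term -> Prop :=
  ground_over (herbrand_sig P).

Fixpoint subst_term (s : nat -> term) (t : term) : term :=
  match t with
  | Var v => s v
  | Fn f ts => Fn f (map (subst_term s) ts)
  end.

Definition subst_atom (s : nat -> term) (A : atom) : atom :=
  mkAtom (pred A) (map (subst_term s) (args A)).

Definition subst_lit (s : nat -> term) (l : lit) : lit :=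
  match l with Pos a => Pos (subst_atom s a) | Neg a => Neg (subst_atom s a) end.

Definition subst_rule (s : nat -> term) (r : rule) : rule :=
  mkRule (map (subst_atom s) (head r)) (map (subst_lit s) (body r)).

Definition Ground (P : program) : rset :=
  fun g => exists r s, In r P /\ (forall v, herbrand_universe P (s v)) /\
                       g = subst_rule s r.

Definition reduct (Q : rset) (M : aset) : rset :=
  fun r' => exists r, Q r /\ (forall B, In (Neg B) (body r) -> ~ M B) /\
    r' = mkRule (head r) (filter (fun l => match l with Pos _ => true | Neg _ => false end) (body r)).

Definition lit_true (M : aset) (l : lit) : Prop :=
  match l with Pos a => M a | Neg a => ~ M a end.

Definition is_model (Q : rset) (M : aset) : Prop :=
  forall r, Q r -> (forall l, In l (body r) -> lit_true M l) ->
            exists A, In A (head r) /\ M A.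

Definition subset (M N : aset) : Prop := forall A, M A -> N A.

Definition minimal_model (Q : rset) (M : aset) : Prop :=
  is_model Q M /\ forall N, is_model Q N -> subset N M -> subset M N.

Definition stable_model (Q : rset) (M : aset) : Prop :=
  minimal_model (reduct Q M) M.

Inductive formula : Type :=
| FAtom : atom -> formula
| FTrue : formula
| FFalse : formula
| FNot : formula -> formula
| FAnd : formula -> formula -> formula
| FOr  : formula -> formula -> formula
| FImp : formula -> formula -> formula.

Fixpoint holds (M : aset) (F : formula) : Prop :=
  match F with
  | FAtom a => M a
  | FTrue => True
  | FFalse => False
  | FNot G => ~ holds M G
  | FAnd G H => holds M G /\ holds M H
  | FOr G H => holds M G \/ holds M H
  | FImp G H => holds M G -> holds M H
  end.

Fixpoint fatoms (F : formula) : list atom :=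
  match F with
  | FAtom a => [a]
  | FTrue | FFalse => []
  | FNot G => fatoms G
  | FAnd G H | FOr G H | FImp G H => fatoms G ++ fatoms H
  end.

Definition skeptical (Q : rset) (F : formula) : Prop :=
  forall M, stable_model Q M -> holds M F.

Definition dep_edge (P : program) (A B : atom) : Prop :=
  exists r, Ground P r /\ In A (head r) /\ atom_in_rule B r.

Definition depends (P : program) : atom -> atom -> Prop :=
  clos_refl_trans atom (dep_edge P).

Definition finitely_recursive (P : program) : Prop :=
  forall A, exists l : list atom, forall B, depends P A B -> In B l.

Definition ground_heads (P : program) : aset :=
  fun A => exists r, Ground P r /\ In A (head r).

(* p_1, p_2, ... is an enumeration of GH (indices start at 1) *)
Definition enumerates (GH : aset) (p : nat -> atom) : Prop :=
  (forall i, 1 <= i -> GH (p i)) /\ (forall A, GH A -> exists i, 1 <= i /\ p i = A).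

Definition module (P : program) (p : nat -> atom) (k : nat) : rset :=
  fun r => Ground P r /\ exists i, 1 <= i <= k /\
             exists A, In A (head r) /\ depends P (p i) A.

(* Main.v *)
Require Import Defs.
From Stdlib Require Import List Arith Lia Relations Classical FunctionalExtensionality PropExtensionality IndefiniteDescription.
Import ListNotations.
Import Defs.

Definition posb (l : lit) : bool := match l with Pos _ => true | Neg _ => false end.

Lemma aset_ext (X Y : aset) : (forall a, X a <-> Y a) -> X = Y.
Proof. intro H; apply functional_extensionality; intro a; apply propositional_extensionality; auto. Qed.
Lemma rset_ext (X Y : rset) : (forall a, X a <-> Y a) -> X = Y.
Proof. intro H; apply functional_extensionality; intro a; apply propositional_extensionality; auto. Qed.

Lemma reduct_model_iff Q M N : is_model (reduct Q M) N <->
  forall r, Q r -> (forall B, In (Neg B) (body r) -> ~ M B) ->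
    (forall a, In (Pos a) (body r) -> N a) -> exists A, In A (head r) /\ N A.
Proof.
  split.
  - intros H r Hr Hn Hb. apply (H (mkRule (head r) (filter posb (body r)))).
    + exists r; split; [exact Hr| split; [exact Hn| reflexivity]].
    + simpl. intros l Hl. apply filter_In in Hl as [Hl Hp].
      destruct l; simpl in *; [apply Hb; exact Hl| discriminate].
  - intros H r' [r [Hr [Hn ->]]] Hb. simpl in *. apply (H r Hr Hn).
    intros a Ha. apply (Hb (Pos a)). apply filter_In. auto.
Qed.

Definition splits (Q : rset) (U : aset) : Prop :=
  forall r A B, Q r -> In A (head r) -> U A -> atom_in_rule B r -> U B.
Definition bot (Q : rset) (U : aset) : rset :=
  fun r => Q r /\ exists A, In A (head r) /\ U A.
Definition inter (M U : aset) : aset := fun A => M A /\ U A.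

Lemma bot_atoms Q U r B : splits Q U -> bot Q U r -> atom_in_rule B r -> U B.
Proof. intros HS [Hr [A [HA HU]]] HB. exact (HS r A B Hr HA HU HB). Qed.

Lemma stable_sub_U Q U M : splits Q U -> stable_model (bot Q U) M -> forall A, M A -> U A.
Proof.
  intros HS [Hmod Hmin].
  assert (H : subset M (inter M U)).
  { apply Hmin; [| intros a [h _]; exact h].
    apply reduct_model_iff. rewrite reduct_model_iff in Hmod.
    intros r Hr Hn Hb. destruct (Hmod r Hr Hn) as [A [HA HMA]].
    - intros a Ha. apply Hb; auto.
    - exists A; split; auto. split; auto. eapply bot_atoms; eauto. left; auto. }
  intros A HA. apply H; auto.
Qed.

Lemma restrict Q U M : splits Q U -> stable_model Q M -> stable_model (bot Q U) (inter M U).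
Proof.
  intros HS [Hmod Hmin]. rewrite reduct_model_iff in Hmod. split.
  - apply reduct_model_iff. intros r Hr Hn Hb.
    destruct (Hmod r (proj1 Hr)) as [A [HA HMA]].
    + intros B HB HMB. apply (Hn B HB). split; auto.
      eapply bot_atoms; eauto. right. exists (Neg B); auto.
    + intros a Ha; apply Hb; auto.
    + exists A; split; auto; split; auto. eapply bot_atoms; eauto. left; auto.
  - intros N HN HNsub. rewrite reduct_model_iff in HN.
    set (N' := fun A => N A \/ (M A /\ ~ U A)).
    assert (HN' : is_model (reduct Q M) N').
    { apply reduct_model_iff. intros r Hr Hn Hb.
      destruct (classic (exists A, In A (head r) /\ U A)) as [Hy | Hno].
      - assert (Hbr : bot Q U r) by (split; auto).
        destruct (HN r Hbr) as [A [HA HNA]].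
        + intros B HB [HMB _]. exact (Hn B HB HMB).
        + intros a Ha. destruct (Hb a Ha) as [h | [_ h]]; auto.
          exfalso; apply h. eapply bot_atoms; eauto. right. exists (Pos a); auto.
        + exists A; split; auto. left; auto.
      - destruct (Hmod r Hr Hn) as [A [HA HMA]].
        + intros a Ha. destruct (Hb a Ha) as [h | [h _]]; auto. apply HNsub; auto.
        + exists A; split; auto. right; split; auto. intro HU; apply Hno; eauto. }
    assert (Hsub : subset M N') by (apply Hmin; auto; intros a [h | [h _]]; [apply HNsub; auto| auto]).
    intros A [HMA HUA]. destruct (Hsub A HMA) as [h | [_ h]]; auto. contradiction.
Qed.

Section Limit.
Variables (Q : rset) (U Ms : nat -> aset).
Hypotheses (HS : forall n, splits Q (U n))
  (Hmono : forall n m, n <= m -> subset (U n) (U m))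
  (Hcov : forall r, Q r -> exists n, bot Q (U n) r)
  (HM : forall n, stable_model (bot Q (U n)) (Ms n))
  (Hch : forall n A, Ms n A <-> (Ms (S n) A /\ U n A)).

Lemma chain_le n m A : n <= m -> (Ms n A <-> Ms m A /\ U n A).
Proof.
  induction 1.
  - split; [intro h; split; auto; eapply stable_sub_U; eauto| intros [h _]; auto].
  - rewrite IHle, Hch. split; [intros [[a b] c]; auto| intros [a c]; repeat split; auto].
    apply (Hmono n m); auto.
Qed.

Definition Mlim : aset := fun A => exists n, Ms n A.

Lemma restr n A : U n A -> (Mlim A <-> Ms n A).
Proof.
  intros HU; split; [intros [m Hm]| intro h; exists n; auto].
  destruct (Nat.le_ge_cases m n) as [h|h].
  - apply (chain_le m n A h) in Hm. apply Hm.
  - apply (chain_le n m A h). auto.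
Qed.

Lemma limit_stable : stable_model Q Mlim.
Proof.
  split.
  - apply reduct_model_iff. intros r Hr Hn Hb.
    destruct (Hcov r Hr) as [n Hbn].
    destruct (HM n) as [Hmod _]. rewrite reduct_model_iff in Hmod.
    destruct (Hmod r Hbn) as [A [HA HMA]].
    + intros B HB HMB. apply (Hn B HB). exists n; auto.
    + intros a Ha. apply (restr n a). eapply bot_atoms; eauto. right; exists (Pos a); auto. auto.
    + exists A; split; auto. exists n; auto.
  - intros N HN HNsub A [n HA]. rewrite reduct_model_iff in HN.
    destruct (HM n) as [_ Hmin].
    assert (H : subset (Ms n) (inter N (U n))).
    { apply Hmin.
      - apply reduct_model_iff. intros r Hbr Hn Hb.
        destruct (HN r (proj1 Hbr)) as [B [HB HNB]].
        + intros B HB HMB. apply (Hn B HB). apply (restr n B); auto.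
          eapply bot_atoms; eauto. right; exists (Neg B); auto.
        + intros a Ha. apply Hb; auto.
        + exists B; split; auto. split; auto. eapply bot_atoms; eauto. left; auto.
      - intros a [h1 h2]. apply (restr n a h2). auto. }
    apply H; auto.
Qed.
End Limit.

Lemma pigeon (L : list atom) : forall (R : nat -> aset -> Prop),
 (forall j, exists j', j <= j' /\ exists X, (forall a, X a -> In a L) /\ R j' X) ->
 exists X, (forall a, X a -> In a L) /\ forall j, exists j', j <= j' /\ R j' X.
Proof.
  induction L as [|a L IH]; intros R H.
  - exists (fun _ => False). split; [intros _ []|].
    intros j. destruct (H j) as [j' [hj [X [HX HR]]]]. exists j'; split; auto.
    replace (fun _ : atom => False) with X; auto.
    apply aset_ext; intro b; split; [intro h; exact (HX b h)| intros []].
  - destruct (classic (forall j, exists j', j <= j' /\ exists X,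
        (forall b, X b -> In b (a::L)) /\ X a /\ R j' X)) as [Hy|Hno].
    + destruct (IH (fun j X' => R j (fun b => b = a \/ X' b))) as [X' [HX' HR]].
      * intro j. destruct (Hy j) as [j' [hj [X [HX [Ha HR]]]]]. exists j'; split; auto.
        exists (fun b => X b /\ b <> a). split.
        -- intros b [h1 h2]. destruct (HX b h1); [congruence| auto].
        -- replace (fun b => b = a \/ X b /\ b <> a) with X; auto.
           apply aset_ext; intro b. split.
           ++ intro h. destruct (classic (b = a)); auto.
           ++ intros [->| [h _]]; auto.
      * exists (fun b => b = a \/ X' b). split; auto.
        intros b [->|h]; simpl; auto.
    + apply not_all_ex_not in Hno as [j0 Hj0].
      destruct (IH R) as [X [HX HR]].
      * intro j. destruct (H (Nat.max j j0)) as [j' [hj [X [HX HR]]]].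
        exists j'; split; [lia|]. exists X; split; auto.
        intros b Hb. destruct (HX b Hb) as [<-|h]; auto.
        exfalso; apply Hj0. exists j'; split; [lia|]. exists X; auto.
      * exists X; split; auto. intros b h; simpl; auto.
Qed.

Lemma holds_ext F : forall M N, (forall a, In a (fatoms F) -> (M a <-> N a)) ->
  (holds M F <-> holds N F).
Proof.
  induction F; intros M N H; simpl in *; try tauto.
  - apply H; auto.
  - rewrite (IHF M N); tauto.
  - rewrite (IHF1 M N), (IHF2 M N); try tauto; intros; apply H; apply in_or_app; auto.
  - rewrite (IHF1 M N), (IHF2 M N); try tauto; intros; apply H; apply in_or_app; auto.
  - rewrite (IHF1 M N), (IHF2 M N); try tauto; intros; apply H; apply in_or_app; auto.
Qed.

Definition D (P : program) (p : nat -> atom) (k : nat) : aset :=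
  fun A => exists i, 1 <= i <= k /\ depends P (p i) A.

Lemma splits_D P p k : splits (Ground P) (D P p k).
Proof.
  intros r A B Hr HA [i [Hi Hd]] HB. exists i; split; auto.
  eapply rt_trans; [exact Hd| apply rt_step; exists r; auto].
Qed.

Lemma module_bot P p k : module P p k = bot (Ground P) (D P p k).
Proof.
  apply rset_ext; intro r; unfold module, bot, D; split.
  - intros [Hr [i [Hi [A [HA Hd]]]]]. split; auto. exists A; split; eauto.
  - intros [Hr [A [HA [i [Hi Hd]]]]]. split; auto. exists i; split; eauto.
Qed.

Lemma D_mono P p n m : n <= m -> subset (D P p n) (D P p m).
Proof. intros h A [i [Hi Hd]]. exists i; split; [lia| auto]. Qed.

Lemma D_fin P p : finitely_recursive P -> forall k, exists L, forall A, D P p k A -> In A L.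
Proof.
  intros HF. induction k as [|k [L IH]].
  - exists []. intros A [i [Hi _]]. lia.
  - destruct (HF (p (S k))) as [l Hl]. exists (L ++ l). intros A [i [Hi Hd]].
    apply in_or_app. destruct (Nat.eq_dec i (S k)) as [->|hne].
    + right; auto.
    + left; apply IH. exists i; split; [lia| auto].
Qed.

Lemma cover P p : disjunctive_program P -> enumerates (ground_heads P) p ->
  forall r, Ground P r -> exists n, 1 <= n /\ bot (Ground P) (D P p n) r.
Proof.
  intros Hdj [_ Hen] r Hr.
  assert (Hne : exists h, In h (head r)).
  { destruct Hr as [r0 [s [Hin [_ ->]]]]. simpl.
    pose proof (Hdj r0 Hin) as Hn. destruct (head r0) as [|h t]; [congruence|].
    exists (subst_atom s h); simpl; auto. }
  destruct Hne as [h Hh].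
  destruct (Hen h) as [i [Hi Hpi]]. { exists r; auto. }
  exists i; split; auto. split; auto. exists h; split; auto.
  exists i; split; [lia|]. rewrite Hpi. apply rt_refl.
Qed.

Lemma bot_bot Q U V : subset U V -> bot (bot Q V) U = bot Q U.
Proof.
  intro h. apply rset_ext; intro r; unfold bot; split.
  - intros [[Hr _] HU]; auto.
  - intros [Hr [A [HA HU]]]. split; [split; auto; exists A; auto| exists A; auto].
Qed.

Lemma splits_bot Q U V : splits Q U -> splits (bot Q V) U.
Proof. intros HS r A B [Hr _]; apply HS; auto. Qed.

Lemma atoms_bot Q U A : splits Q U -> atoms_of (bot Q U) A -> U A.
Proof. intros HS [r [Hr HA]]. eapply bot_atoms; eauto. Qed.

Lemma atoms_mono Q U V A : subset U V -> atoms_of (bot Q U) A -> atoms_of (bot Q V) A.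
Proof. intros h [r [[Hr [B [HB HU]]] HA]]. exists r; split; auto. split; auto. exists B; auto. Qed.

Lemma fatoms_K P p (l : list atom) : disjunctive_program P -> enumerates (ground_heads P) p ->
  (forall A, In A l -> atoms_of (Ground P) A) ->
  exists K, 1 <= K /\ forall A, In A l -> atoms_of (module P p K) A.
Proof.
  intros Hdj Hen. induction l as [|a l IH]; intro H.
  - exists 1; split; auto. intros _ [].
  - destruct IH as [K [HK HA]]. { intros; apply H; simpl; auto. }
    destruct (H a (or_introl eq_refl)) as [r [Hr Har]].
    destruct (cover P p Hdj Hen r Hr) as [n [Hn Hb]].
    exists (Nat.max K n). split; [lia|]. intros A [<-|HAl]; rewrite module_bot.
    + apply (atoms_mono _ (D P p n)). apply D_mono; lia. exists r; auto.
    + apply (atoms_mono _ (D P p K)). apply D_mono; lia. rewrite <- module_bot. auto.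
Qed.

Theorem theorem5p2 (P : program) (p : nat -> atom) (F : formula) :
  disjunctive_program P ->
  finitely_recursive P ->
  enumerates (ground_heads P) p ->
  (forall A, In A (fatoms F) -> atoms_of (Ground P) A) ->
  (skeptical (Ground P) F <->
   exists k, 1 <= k /\ skeptical (module P p k) F /\
             (forall A, In A (fatoms F) -> atoms_of (module P p k) A)).
Proof.
  intros Hdj Hfr Hen HFa. split.
  2:{ intros [k [Hk [Hsk Hat]]] M HM.
      pose proof (restrict _ _ _ (splits_D P p k) HM) as H.
      rewrite <- module_bot in H. apply Hsk in H.
      apply (holds_ext F M (inter M (D P p k))); auto.
      intros a Ha. unfold inter. split; [intro h; split; auto| intros [h _]; auto].
      apply (atoms_bot (Ground P)); [apply splits_D| rewrite <- module_bot; auto]. }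
  intro Hsk.
  destruct (fatoms_K P p (fatoms F) Hdj Hen HFa) as [K [HK HKa]].
  destruct (classic (exists k, K <= k /\ skeptical (module P p k) F)) as [[k [Hk Hs]]|Hno].
  { exists k; split; [lia|]; split; auto. intros A HA. rewrite module_bot.
    apply (atoms_mono _ (D P p K)); [apply D_mono; auto| rewrite <- module_bot; auto]. }
  exfalso.
  set (U := fun n => D P p (K + n)).
  set (B := fun n => bot (Ground P) (U n)).
  assert (HUm : forall n m, n <= m -> subset (U n) (U m)) by (intros; apply D_mono; lia).
  assert (HF0 : forall n a, In a (fatoms F) -> U n a).
  { intros n a Ha. apply (HUm 0 n); [lia|]. unfold U; rewrite Nat.add_0_r.
    apply (atoms_bot (Ground P)); [apply splits_D| rewrite <- module_bot; auto]. }
  assert (Hex : forall n, exists Y, stable_model (B n) Y /\ ~ holds Y F).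
  { intro n. assert (h : ~ skeptical (module P p (K + n)) F) by (intro h; apply Hno; exists (K+n); split; [lia| auto]).
    unfold skeptical in h. apply not_all_ex_not in h as [Y h].
    apply imply_to_and in h. exists Y. unfold B, U. rewrite <- module_bot. auto. }
  set (Rn := fun n j X => n <= j /\ exists Y, stable_model (B j) Y /\ ~ holds Y F /\ inter Y (U n) = X).
  set (Good := fun n X => forall j, exists j', j <= j' /\ Rn n j' X).
  assert (Hgs : forall n X, Good n X -> stable_model (B n) X /\ ~ holds X F).
  { intros n X HG. destruct (HG 0) as [j' [_ [hn [Y [HY [HnY <-]]]]]].
    split.
    - pose proof (restrict _ _ _ (splits_bot _ _ (U j') (splits_D P p (K + n))) HY) as h.
      unfold B in h |- *. rewrite bot_bot in h; auto. unfold U; apply HUm; lia.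
    - intro h. apply HnY. refine (proj1 (holds_ext F (inter Y (U n)) Y _) h).
      intros a Ha. unfold inter. split; [intros [h1 _]; auto| intro h1; split; auto].
  }
  assert (Hbase : exists X, Good 0 X).
  { destruct (D_fin P p Hfr (K + 0)) as [L HL].
    destruct (pigeon L (Rn 0)) as [X [_ HX]].
    - intro j. exists j; split; auto. destruct (Hex j) as [Y [HY HnY]].
      exists (inter Y (U 0)). split; [intros a [_ h]; apply HL; exact h|].
      split; [lia|]. exists Y; auto.
    - exists X; exact HX. }
  assert (Hstep : forall n X, Good n X -> exists X', Good (S n) X' /\ inter X' (U n) = X).
  { intros n X HG. destruct (D_fin P p Hfr (K + S n)) as [L HL].
    destruct (pigeon L (fun j X' => S n <= j /\ exists Y, stable_model (B j) Y /\ ~ holds Y F /\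
                 inter Y (U (S n)) = X' /\ inter Y (U n) = X)) as [X' [_ HX']].
    - intro j. destruct (HG (Nat.max j (S n))) as [j' [hj [_ [Y [HY [HnY HYX]]]]]].
      exists j'; split; [lia|]. exists (inter Y (U (S n))). split; [intros a [_ h]; apply HL; exact h|].
      split; [lia|]. exists Y; auto.
    - exists X'. split.
      + intro j. destruct (HX' j) as [j' [hj [hn [Y [HY [HnY [h1 _]]]]]]].
        exists j'; split; auto. split; auto. exists Y; auto.
      + destruct (HX' 0) as [j' [_ [_ [Y [_ [_ [<- <-]]]]]]].
        apply aset_ext; intro a; unfold inter; split.
        * intros [[h1 h2] h3]; auto.
        * intros [h1 h3]; repeat split; auto. apply (HUm n (S n)); auto. }
  assert (Hstep' : forall n X, exists X', Good n X -> Good (S n) X' /\ inter X' (U n) = X).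
  { intros n X. destruct (classic (Good n X)) as [h|h].
    - destruct (Hstep n X h) as [X' HX']. exists X'; auto.
    - exists X; intro; contradiction. }
  set (g := fun n X => proj1_sig (constructive_indefinite_description _ (Hstep' n X))).
  assert (Hg : forall n X, Good n X -> Good (S n) (g n X) /\ inter (g n X) (U n) = X).
  { intros n X. unfold g. destruct (constructive_indefinite_description _ (Hstep' n X)); simpl; auto. }
  destruct (constructive_indefinite_description _ Hbase) as [X0 HX0].
  set (Ms := nat_rect (fun _ => aset) X0 g).
  assert (HMs : forall n, Good n (Ms n)).
  { induction n; [exact HX0| apply (Hg n (Ms n) IHn)]. }
  assert (Hch : forall n A, Ms n A <-> (Ms (S n) A /\ U n A)).
  { intros n A. destruct (Hg n (Ms n) (HMs n)) as [_ h].
    change (Ms (S n)) with (g n (Ms n)). transitivity (inter (g n (Ms n)) (U n) A); [rewrite h; reflexivity| unfold inter; reflexivity]. }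
  assert (HS : forall n, splits (Ground P) (U n)) by (intro; apply splits_D).
  assert (Hcov : forall r, Ground P r -> exists n, bot (Ground P) (U n) r).
  { intros r Hr. destruct (cover P p Hdj Hen r Hr) as [n [_ [Hr' [A [HA HD]]]]].
    exists n. split; auto. exists A; split; auto. apply (D_mono P p n); [lia| auto]. }
  assert (HM : forall n, stable_model (bot (Ground P) (U n)) (Ms n)) by (intro n; apply (Hgs n), HMs).
  pose proof (limit_stable _ U Ms HS HUm Hcov HM Hch) as Hst.
  apply Hsk in Hst.
  apply (proj2 (Hgs 0 (Ms 0) (HMs 0))).
  apply (holds_ext F (Mlim Ms)); auto.
  intros a Ha. apply (restr _ U Ms HS HUm HM Hch). apply HF0; auto.
Qed.
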